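(* Let $R$ be a subring of the field $\bar{\mathbb{Q}}$ of algebraic numbers, let $S\subset\mathbb{N}$ be a $\Leftrightarrow_R$-connected subset, and let $T\subset S$. Suppose that for some $n\in S$ there are infinitely many elements $m\in T$ with $m\Leftrightarrow_R n$. Then the homomorphism $\tau^R_{S,T}\colon R[q]^S\to P_T(R)$ is injective. In particular, if $R$ is a subring of the ring of algebraic integers, then for any subset $T\subset\mathbb{N}$ containing infinitely many prime powers, $\tau^R_{\mathbb{N},T}\colon R[q]^{\mathbb{N}}\to P_T(R)$ is injective.
   Context: All rings are commutative with unit; $q$ is an indeterminate. For $n\in\mathbb{N}$, $\Phi_n(q)$ is the $n$th cyclotomic polynomial. For $S\subset\mathbb{N}$, $\Phi_S^*$ is the multiplicative subset of $\mathbb{Z}[q]$ generated by $\{\Phi_m(q):m\in S\}$, directed by divisibility, and $R[q]^S=\varprojlim_{f\in\Phi_S^*}R[q]/(f)$. For $T\subset S$, $P_T(R)=\prod_{m\in T}R[q]/(\Phi_m(q))$ and $\tau^R_{S,T}\colon R[q]^S\to P_T(R)$ is the homomorphism induced by $f(q)\mapsto (f(q)\bmod \Phi_m(q))_{m\in T}$. A ring $R$ is $p$-adically separated if $\bigcap_{j\ge0}p^jR=(0)$. For $m,m'\in\mathbb{N}$ write $m\Leftrightarrow_R m'$ if $m=m'$, or $m/m'$ is an integer power (positive or negative exponent) of a prime $p$ with $R$ $p$-adically separated, or $R=\{0\}$. A subset $S\subset\mathbb{N}$ is $\Leftrightarrow_R$-connected if it is nonempty and any two elements are joined by a finite chain in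 $S$ with consecutive elements related by $\Leftrightarrow_R$. *)

(* Defs.v *)
From HB Require Import structures.
From mathcomp Require Import all_boot all_order all_algebra all_field.
Set Implicit Arguments. Unset Strict Implicit. Unset Printing Implicit Defensive.
Import Order.TTheory GRing.Theory Num.Theory.
Local Open Scope ring_scope.

(* algC plays the role of the field Qbar of algebraic numbers.
   A subring R of Qbar is a predicate R : {pred algC} with subring_closed R. *)

Definition Phi (n : nat) : {poly int} := 'Phi_n.

Definition toC (f : {poly int}) : {poly algC} := map_poly (fun z : int => z%:~R) f.

Definition inPhiS (S : nat -> Prop) (f : {poly int}) : Prop :=
  exists s : seq nat, (forall m, m \in s -> S m) /\ f = \prod_(m <- s) Phi m.

Definition dvdZ (f g : {poly int}) : Prop := exists h : {poly int}, g = h * f.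

Definition congR (R : {pred algC}) (f : {poly int}) (a b : {poly algC}) : Prop :=
  exists k : {poly algC}, k \is a polyOver R /\ a - b = k * toC f.

(* Elements of R[q]^S = lim_{f in Phi_S^*} R[q]/(f), represented as compatible
   families of representatives x f in R[q]. *)
Definition inLim (R : {pred algC}) (S : nat -> Prop) (x : {poly int} -> {poly algC}) : Prop :=
  (forall f, inPhiS S f -> x f \is a polyOver R) /\
  (forall f g, inPhiS S f -> inPhiS S g -> dvdZ f g -> congR R f (x g) (x f)).

Definition limEq (R : {pred algC}) (S : nat -> Prop) (x y : {poly int} -> {poly algC}) : Prop :=
  forall f, inPhiS S f -> congR R f (x f) (y f).

(* tau^R_{S,T} x = tau^R_{S,T} y in P_T(R) *)
Definition tauEq (R : {pred algC}) (T : nat -> Prop) (x y : {poly int} -> {poly algC}) : Prop :=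
  forall m, T m -> congR R (Phi m) (x (Phi m)) (y (Phi m)).

Definition tau_injective (R : {pred algC}) (S T : nat -> Prop) : Prop :=
  forall x y, inLim R S x -> inLim R S y -> tauEq R T x y -> limEq R S x y.

Definition padic_sep (R : {pred algC}) (p : nat) : Prop :=
  forall x, x \in R -> (forall j : nat, exists2 y, y \in R & x = (p ^ j)%:R * y) -> x = 0.

Definition relR (R : {pred algC}) (m m' : nat) : Prop :=
  m = m' \/
  (exists p k : nat, prime p /\ padic_sep R p /\ (m = m' * p ^ k \/ m' = m * p ^ k))%N \/
  (forall x, x \in R -> x = 0).

Inductive chainR (R : {pred algC}) (S : nat -> Prop) : nat -> nat -> Prop :=
| chainR_refl a : S a -> chainR R S a a
| chainR_step a b c : S a -> relR R a b -> chainR R S b c -> chainR R S a c.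

Definition connectedR (R : {pred algC}) (S : nat -> Prop) : Prop :=
  (exists n, S n) /\ (forall a b, S a -> S b -> chainR R S a b).

Definition prime_power (m : nat) : Prop := exists p k : nat, prime p /\ (0 < k)%N /\ m = (p ^ k)%N.

(* Main.v *)
Require Import Defs.
From HB Require Import structures.
From mathcomp Require Import all_boot all_order all_algebra all_field.
From mathcomp Require Import zify ring.
From Stdlib Require Import Lia Classical.
Set Implicit Arguments. Unset Strict Implicit. Unset Printing Implicit Defensive.
Import Order.TTheory GRing.Theory Num.Theory.
Local Open Scope ring_scope.
Lemma prim_uniq (m1 m2 : nat) (x : algC) :
  m1.-primitive_root x -> m2.-primitive_root x -> m1 = m2.
Proof.
move=> p1 p2; apply/eqP; rewrite eqn_dvd.
rewrite (prim_order_dvd p1) (prim_order_dvd p2).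
by rewrite (prim_expr_order p1) (prim_expr_order p2) !eqxx.
Qed.

Lemma DIVC (m : nat) (z : algC) (Q : {poly algC}) :
  m.-primitive_root z -> (forall x, m.-primitive_root x -> root Q x) ->
  cyclotomic z m %| Q.
Proof.
move=> pz HQ.
have ->: cyclotomic z m = \prod_(x <- [seq z ^+ k | k : 'I_m in [pred k : 'I_m | coprime k m]]) ('X - x%:P).
  by rewrite big_image.
apply: uniq_roots_dvdp.
  apply/allP => x /imageP [k /= ck ->]; apply: HQ.
  by rewrite prim_root_exp_coprime.
rewrite uniq_rootsE map_inj_in_uniq ?enum_uniq // => i j _ _ /eqP.
rewrite (eq_prim_root_expr pz) !modn_small // => /eqP ij; exact: val_inj.
Qed.

Lemma CPc (a b : nat) (za zb : algC) :
  a.-primitive_root za -> b.-primitive_root zb -> a != b ->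
  coprimep (cyclotomic za a) (cyclotomic zb b).
Proof.
move=> pa pb ab; rewrite /coprimep.
apply/negPn/negP => /closed_rootP [x rx].
have r1 := root_dvdp (dvdp_gcdl _ _) rx.
have r2 := root_dvdp (dvdp_gcdr _ _) rx.
rewrite (root_cyclotomic pa) in r1; rewrite (root_cyclotomic pb) in r2.
by move: ab; rewrite (prim_uniq r1 r2) eqxx.
Qed.

Lemma TOT (n p : nat) : prime p -> (0 < n)%N ->
  totient (n * p) = if (p %| n)%N then (totient n * p)%N else (totient n * p.-1)%N.
Proof.
move=> pp n0; case: ifP => pn; last first.
  rewrite totient_coprime ?(totient_prime pp) //.
  by rewrite coprime_sym prime_coprime // pn.
have [m cm ->] := pfactor_coprime pp n0.
set a := logn p n.
have a0 : (0 < a)%N by rewrite /a logn_gt0 mem_primes pp n0 pn.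
rewrite -mulnA -expnSr !totient_coprime; try by rewrite coprime_sym coprimeXr.
rewrite !totient_pfactor //= -!mulnA -expnSr prednK //.
all: by apply: coprimeXr; rewrite coprime_sym.
Qed.

Local Notation pZtoC := (map_poly (intr : int -> algC)).

Lemma F12C (n p : nat) : prime p -> (0 < n)%N ->
  pZtoC ('Phi_(n * p)) * (if (p %| n)%N then 1 else pZtoC 'Phi_n) = pZtoC 'Phi_n \Po 'X^p.
Proof.
move=> pp n0; have p0 := prime_gt0 pp; have p1 := prime_gt1 pp.
have np0 : (0 < n * p)%N by rewrite muln_gt0 n0.
have [z pz] := C_prim_root_exists np0.
have pzp : n.-primitive_root (z ^+ p).
  by have := dvdn_prim_root pz (dvdn_mulr p (dvdnn n)); rewrite mulKn.
rewrite (Cintr_Cyclotomic pz) (Cintr_Cyclotomic pzp).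
set B := cyclotomic (z ^+ p) n \Po 'X^p.
have rB x : root B x = n.-primitive_root (x ^+ p).
  by rewrite /root horner_comp hornerXn -/(root _ _) (root_cyclotomic pzp).
have sX : size ('X^p : {poly algC}) = p.+1 by rewrite size_polyXn.
have monB : B \is monic.
  rewrite monicE lead_coef_comp ?sX // lead_coefXn expr1n mulr1.
  by rewrite -monicE cyclotomic_monic.
have sB : size B = (totient n * p).+1.
  have := size_comp_poly (cyclotomic (z ^+ p) n) 'X^p.
  rewrite size_cyclotomic sX /= => <-; rewrite prednK // lt0n size_poly_eq0.
  exact: monic_neq0.
have d1 : cyclotomic z (n * p) %| B.
  apply: DIVC pz _ => x px; rewrite rB.
  by have := dvdn_prim_root px (dvdn_mulr p (dvdnn n)); rewrite mulKn.
apply/eqP; rewrite -eqp_monic ?monB //; last first.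
  case: ifP => _; rewrite ?mulr1 ?cyclotomic_monic //.
  by rewrite monicMr cyclotomic_monic.
rewrite -dvdp_size_eqp; last first.
  case: ifP => pn; rewrite ?mulr1 // Gauss_dvdp ?d1 /=.
    apply: DIVC pzp _ => x px; rewrite rB prim_root_exp_coprime //.
    by rewrite prime_coprime // pn.
  apply: CPc pz pzp _; rewrite -{2}(muln1 n) eqn_pmul2l //.
  by rewrite neq_ltn p1 orbT.
rewrite sB; case: ifP => pn; rewrite ?mulr1.
  by rewrite size_cyclotomic TOT // pn.
rewrite size_mul ?monic_neq0 ?cyclotomic_monic // !size_cyclotomic /=.
by rewrite TOT // pn addnS -mulnSr prednK.
Qed.

Lemma F12 (n p : nat) : prime p -> (0 < n)%N ->
  'Phi_(n * p) * (if (p %| n)%N then 1 else 'Phi_n) = 'Phi_n \Po 'X^p.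
Proof.
move=> pp n0; apply: (map_inj_poly (intr_inj : injective (intr : int -> algC))) => //.
rewrite rmorphM map_comp_poly map_polyXn -F12C //.
by case: ifP => _; rewrite ?rmorph1.
Qed.

Lemma Frob (p : nat) (g : {poly 'F_p}) : prime p -> g ^+ p = g \Po 'X^p.
Proof.
move=> pp; have p0 := prime_gt0 pp.
have cp : [char {poly 'F_p}].-nat p by rewrite pnatE // pchar_poly pchar_Fp.
elim/poly_ind: g => [|g c IH].
  by rewrite expr0n comp_poly0; case: p pp p0 cp.
rewrite exprDn_pchar // exprMn IH comp_polyD comp_polyM comp_polyX comp_polyC.
have -> : c%:P ^+ p = (c ^+ p)%:P by rewrite rmorphXn.
by have := expf_card c; rewrite card_Fp // => ->.
Qed.

Lemma intFp0 (p : nat) (c : int) : prime p -> (c%:~R : 'F_p) = 0 -> (p%:Z %| c)%Z.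
Proof.
move=> pp h.
have : ((`|c|%N)%:R : 'F_p) = 0.
  case: c h => n /= h; first exact: h.
  by move: h; rewrite NegzE mulrNz => /eqP; rewrite oppr_eq0 => /eqP.
move/(congr1 (@nat_of_ord _)); rewrite val_Fp_nat //= => /eqP.
by [].
Qed.

Lemma LIFT (p : nat) (g : {poly int}) : prime p ->
  map_poly (intr : int -> 'F_p) g = 0 -> exists a : {poly int}, g = p%:R * a.
Proof.
move=> pp h.
have : g \is a polyOver (dvdz p%:Z).
  apply/polyOverP => i; suff: (p%:Z %| g`_i)%Z by [].
  by apply: (@intFp0 p _ pp); rewrite -coef_map h coef0.
case/polyOver_dvdzP => a ->; exists a.
by rewrite -mul_polyC -natz rmorph_nat.
Qed.

Lemma CONG1 (n p : nat) : prime p -> (0 < n)%N ->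
  map_poly (intr : int -> 'F_p) 'Phi_(n * p) =
  map_poly (intr : int -> 'F_p) 'Phi_n ^+ (if (p %| n)%N then p else p.-1).
Proof.
move=> pp n0; have := congr1 (map_poly (intr : int -> 'F_p)) (F12 pp n0).
rewrite rmorphM map_comp_poly map_polyXn -Frob //.
have nz : map_poly (intr : int -> 'F_p) 'Phi_n != 0.
  by apply: monic_neq0; apply: monic_map; apply: Cyclotomic_monic.
case: ifP => _; first by rewrite rmorph1 mulr1.
by move=> h; apply: (mulIf nz); rewrite h -exprSr prednK // prime_gt0.
Qed.

Lemma CONGk (n p k : nat) : prime p -> (0 < n)%N -> (0 < k)%N ->
  exists2 d, (p.-1 * p ^ k.-1 <= d)%N &
  map_poly (intr : int -> 'F_p) 'Phi_(n * p ^ k) = map_poly (intr : int -> 'F_p) 'Phi_n ^+ d.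
Proof.
move=> pp n0; elim: k => // -[_ _ | k IH _].
  rewrite expn1 CONG1 //; exists (if (p %| n)%N then p else p.-1) => //.
  by rewrite muln1; case: ifP => // _; rewrite leq_pred.
have [d dle ed] := IH isT; exists (d * p)%N.
  by rewrite /= expnSr mulnA leq_mul2r dle orbT.
have -> : (n * p ^ k.+2 = (n * p ^ k.+1) * p)%N by rewrite expnSr mulnA.
rewrite CONG1 //; last by rewrite muln_gt0 n0 expn_gt0 prime_gt0.
by rewrite dvdn_mull ?dvdn_exp // ed -exprM.
Qed.

Lemma CONG (n p k : nat) : prime p -> (0 < n)%N -> (0 < k)%N ->
  exists2 d, (p.-1 * p ^ k.-1 <= d)%N &
  exists a : {poly int}, 'Phi_(n * p ^ k) = 'Phi_n ^+ d + p%:R * a.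
Proof.
move=> pp n0 k0; have [d dle ed] := CONGk pp n0 k0; exists d => //.
have [a ea] := @LIFT p ('Phi_(n * p ^ k) - 'Phi_n ^+ d) pp
  ltac:(by rewrite rmorphB rmorphXn /= ed subrr).
by exists a; rewrite -ea addrC subrK.
Qed.

Definition inI (N : nat) (M g : {poly int}) :=
  exists a b : {poly int}, g = N%:R * a + M * b.

Lemma I_mul N1 N2 M g1 g2 : inI N1 M g1 -> inI N2 M g2 -> inI (N1 * N2) M (g1 * g2).
Proof.
move=> [a1 [b1 ->]] [a2 [b2 ->]].
exists (a1 * a2), (N1%:R * a1 * b2 + b1 * (N2%:R * a2 + M * b2)).
by rewrite natrM; ring.
Qed.

Lemma I_one M : inI 1 M 1.
Proof. by exists 1, 0; rewrite mulr0 addr0 mulr1. Qed.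

Lemma I_exp N M g r : inI N M g -> inI (N ^ r) M (g ^+ r).
Proof.
move=> h; elim: r => [|r IH]; first by rewrite expn0 expr0; apply: I_one.
by rewrite expnSr exprSr; apply: I_mul.
Qed.

Lemma I_powM N M g E : inI N M g -> inI N (M ^+ E) (g ^+ E).
Proof.
move=> [a [b eg]].
exists (a * \sum_(i < E) g ^+ (E.-1 - i) * (M * b) ^+ i), (b ^+ E).
have := subrXX g (M * b) E; rewrite {2}eg addrK => h.
by rewrite -exprMn mulrA -h subrK.
Qed.

Lemma I_weak N M g E E' : inI N (M ^+ E') g -> (E <= E')%N -> inI N (M ^+ E) g.
Proof.
move=> [a [b ->]] le; exists a, (M ^+ (E' - E) * b).
by rewrite mulrA -exprD subnKC.
Qed.

Lemma I_cong N M g d a : g = M ^+ d + N%:R * a -> forall E, (E <= d)%N -> inI N (M ^+ E) g.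
Proof.
move=> eg E le; exists a, (M ^+ (d - E)).
by rewrite eg -exprD subnKC // addrC.
Qed.

Section Div.
Variable R : {pred algC}.
Hypothesis RR : subring_closed R.
HB.instance Definition _ := GRing.isSubringClosed.Build algC R RR.

Lemma DIVR (M g : {poly algC}) : M \is monic -> M \is a polyOver R ->
  g \is a polyOver R -> exists q r, [/\ q \is a polyOver R, r \is a polyOver R,
    g = q * M + r & (size r < size M)%N].
Proof.
move=> mM RM; have M0 : (0 < size M)%N by rewrite lt0n size_poly_eq0 monic_neq0.
move: {2}(size g) (leqnn (size g)) => n; elim: n g => [|n IH] g sg Rg.
  exists 0, g; split; rewrite ?mul0r ?add0r ?rpred0 //.
  exact: leq_ltn_trans sg M0.
case: (ltnP (size g) (size M)) => sgM.
  by exists 0, g; split; rewrite ?mul0r ?add0r ?rpred0.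
set c := lead_coef g; set k := (size g - size M)%N.
have Rc : c \in R by rewrite /c lead_coefE; apply/(polyOverP Rg).
set g1 := g - c *: 'X^k * M.
have Rg1 : g1 \is a polyOver R.
  by rewrite rpredB // rpredM // polyOverZ // polyOverXn.
have sg1 : (size g1 <= n)%N.
  have : (size g1 <= (size g).-1)%N.
    apply/leq_sizeP => j hj; rewrite /g1 coefB -scalerAl coefZ coefXnM.
    have kj : (k <= j)%N.
      by apply: leq_trans hj; rewrite /k -subn1 leq_sub2l.
    rewrite ltnNge kj /=.
    move: hj; rewrite leq_eqVlt => /orP [/eqP ej | lj].
      rewrite -ej /c lead_coefE -lead_coefE.
      have -> : ((size g).-1 - k = (size M).-1)%N.
        rewrite /k; lia.
      by rewrite -lead_coefE (monicP mM) mulr1 subrr.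
    rewrite (nth_default _ (_ : size g <= j)%N); last lia.
    rewrite (nth_default _ (_ : size M <= j - k)%N) ?mulr0 ?subrr //.
    rewrite /k; lia.
  move=> h; apply: leq_trans h _; rewrite -ltnS prednK //.
  exact: leq_trans M0 sgM.
have [q [r [Rq Rr eg1 sr]]] := IH g1 sg1 Rg1.
exists (q + c *: 'X^k), r; split => //.
  by rewrite rpredD // polyOverZ // polyOverXn.
by rewrite mulrDl -addrAC -eg1 /g1 subrK.
Qed.


Lemma divR (M g : {poly algC}) : M \is monic -> M \is a polyOver R ->
  g \is a polyOver R -> (g %/ M \is a polyOver R) /\ (g %% M \is a polyOver R).
Proof.
move=> mM RM Rg; have [q [r [Rq Rr eg sr]]] := DIVR mM RM Rg.
by rewrite eg divp_addl_mul_small // modp_addl_mul_small.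
Qed.

Lemma toC_over (f : {poly int}) : toC f \is a polyOver R.
Proof. by apply/polyOverP => i; rewrite /toC coef_map /= rpred_int. Qed.

Lemma toCM f g : toC (f * g) = toC f * toC g.
Proof. by rewrite /toC rmorphM. Qed.
Lemma toCX f e : toC (f ^+ e) = toC f ^+ e.
Proof. by rewrite /toC rmorphXn. Qed.
Lemma toCD f g : toC (f + g) = toC f + toC g.
Proof. by rewrite /toC rmorphD. Qed.
Lemma toC_nat N : toC N%:R = N%:R.
Proof. by rewrite /toC rmorph_nat. Qed.
Lemma toC1 : toC 1 = 1.
Proof. by rewrite /toC rmorph1. Qed.
Lemma toC_prod (s : seq nat) (F : nat -> {poly int}) :
  toC (\prod_(m <- s) F m) = \prod_(m <- s) toC (F m).
Proof. by rewrite /toC rmorph_prod. Qed.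

Lemma toC_monic (f : {poly int}) : f \is monic -> toC f \is monic.
Proof. exact: monic_map. Qed.

Lemma Phi_monic m : Phi m \is monic.
Proof. exact: Cyclotomic_monic. Qed.

Lemma inPhiS_monic (S : nat -> Prop) f : inPhiS S f -> f \is monic.
Proof. by case=> s [_ ->]; apply: monic_prod => m _; apply: Phi_monic. Qed.

Lemma cong_iff (f : {poly int}) a b : f \is monic -> a \is a polyOver R ->
  b \is a polyOver R -> congR R f a b <-> toC f %| a - b.
Proof.
move=> mf Ra Rb; split.
  by case=> k [_ ->]; rewrite dvdp_mull.
move=> h; exists ((a - b) %/ toC f); split; last by rewrite divpK.
by case: (divR (toC_monic mf) (toC_over f) (rpredB Ra Rb)).
Qed.

Definition kills (Ns : nat -> nat -> Prop) := forall c, c \in R ->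
  (forall r, exists N, Ns r N /\ exists y, y \in R /\ c = N%:R * y) -> c = 0.

Lemma KEY (M : {poly int}) (w : {poly algC}) (Ns : nat -> nat -> Prop) :
  M \is monic -> w \is a polyOver R -> kills Ns ->
  (forall r, exists N, Ns r N /\ exists u v, u \is a polyOver R /\ w = N%:R * u + toC M * v) ->
  toC M %| w.
Proof.
move=> mM Rw kN H; apply/modp_eq0P; apply/polyP => i; rewrite coef0.
have [_ Rm] := divR (toC_monic mM) (toC_over M) Rw.
apply: kN; first exact/(polyOverP Rm).
move=> r; have [N [NsN [u [v [Ru ew]]]]] := H r; exists N; split => //.
have [_ Rmu] := divR (toC_monic mM) (toC_over M) Ru.
exists ((u %% toC M)`_i); split; first exact/(polyOverP Rmu).
rewrite ew modpD modp_mulr addr0 mulr_natl -scaler_nat modpZl coefZ.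
by [].
Qed.

Lemma AUX (c : algC) : c \in R -> c != 0 ->
  exists2 a0 : int, a0 != 0 & exists2 t, t \in R & a0%:~R = c * t.
Proof.
move=> Rc c0.
have [p [_ mp] dvp] := minCpolyP c.
have rp : root (map_poly ratr p) c by rewrite dvp dvdpp.
have [q [a a0 ep]] := rat_poly_scale p.
have rq : root (map_poly (intr : int -> algC) q) c.
  move: rp; rewrite ep map_polyZ /= rootZ; last first.
    by rewrite fmorphV /= rmorph_int invr_eq0 intr_eq0.
  rewrite -map_poly_comp; congr (root _ c); apply: eq_map_poly => b /=.
  exact: rmorph_int.
have q0 : q != 0.
  apply/negP => /eqP q0; move: ep; rewrite q0 rmorph0 scaler0 => p0.
  by move: (monic_neq0 mp); rewrite p0 eqxx.
have [m [Q /implyP /(_ q0) nQ eq]] := multiplicity_XsubC q 0.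
set QC := map_poly (intr : int -> algC) Q.
have rQ : QC.[c] = 0.
  move: rq; rewrite eq rmorphM rmorphXn /= rmorphB /= map_polyX map_polyC /= rmorph0.
  rewrite subr0 /root hornerM hornerXn mulf_eq0 expf_eq0 (negPf c0) andbF orbF.
  by move/eqP.
exists Q`_0; first by move: nQ; rewrite /root horner_coef0.
have eP : QC = Poly (behead QC) * 'X + (QC`_0)%:P.
  rewrite -cons_poly_def -{1}[QC]polyseqK; case: (polyseq QC) => [|h t] //=.
  by rewrite cons_poly_def polyC0 mul0r add0r.
exists (- (Poly (behead QC)).[c]).
  rewrite rpredN rpred_horner //; apply/polyOverP => i.
  by rewrite coef_Poly nth_behead /QC coef_map /= rpred_int.
move: rQ; rewrite {1}eP hornerD hornerMX hornerC => /eqP.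
rewrite addrC addr_eq0 => /eqP e0.
have -> : (Q`_0)%:~R = QC`_0 by rewrite /QC coef_map.
by rewrite e0 mulrN mulrC.
Qed.

Lemma kill_pow (p : nat) : padic_sep R p -> kills (fun r N => N = (p ^ r)%N).
Proof.
move=> sp c Rc H; apply: sp => // j.
by have [N [-> [y [Ry ->]]]] := H j; exists y.
Qed.

Lemma kill_primes :
  kills (fun r N => [/\ prime N, (r < N)%N & padic_sep R N]).
Proof.
move=> c Rc H; apply/eqP/negPn/negP => c0.
have [a0 a00 [t Rt ea]] := AUX Rc c0.
have [N [[pN ltN sN] [y [Ry ec]]]] := H `|a0|%N.
have cop : coprimez a0 N%:Z.
  rewrite coprimezE /= coprime_sym prime_coprime //.
  apply/negP => /dvdn_leq; rewrite absz_gt0 a00 => /(_ isT).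
  by rewrite leqNgt ltN.
have [u [v euv]] := Bezoutz a0 N%:Z.
move: cop; rewrite /coprimez => /eqP g1; rewrite g1 in euv.
have e1 : (1 : algC) = N%:R * (u%:~R * y * t + v%:~R).
  have : ((u * a0 + v * N%:Z)%:~R : algC) = 1 by rewrite euv.
  rewrite rmorphD !rmorphM /= ea ec -[(N%:Z)%:~R]/(N%:R) => h; rewrite -[LHS]h; ring.
have Rw : u%:~R * y * t + v%:~R \in R by rewrite rpredD ?rpredM ?rpred_int.
have : (1 : algC) = 0.
  apply: sN; first exact: rpred1.
  move=> j; exists ((u%:~R * y * t + v%:~R) ^+ j); first exact: rpredX.
  by rewrite natrX -exprMn -e1 expr1n.
by move/eqP; rewrite oner_eq0.
Qed.

Lemma sepAint (p : nat) : {subset R <= Aint} -> prime p -> padic_sep R p.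
Proof.
move=> RA pp c Rc H; apply/eqP/negPn/negP => c0.
have [a0 a00 [t Rt ea]] := AUX Rc c0.
have [y Ry ec] := H `|a0|%N.
set j := `|a0|%N in ec.
have Ryt : y * t \in R by rewrite rpredM.
have p0 : (p ^ j)%:R != 0 :> algC.
  by rewrite pnatr_eq0 -lt0n expn_gt0 prime_gt0.
have eyt : y * t = a0%:~R / (p ^ j)%:R.
  by rewrite ea ec; field.
have : y * t \in Num.int.
  apply: Cint_rat_Aint; last exact: RA.
  by rewrite eyt rpred_div ?rpred_int ?rpred_nat.
case/intrP => b eb.
have eab : a0 = (p ^ j)%:Z * b.
  apply: (@intr_inj algC); rewrite ea ec -mulrA eb rmorphM /=.
  by [].
have b0 : b != 0 by apply: contraNneq a00 => b0; rewrite eab b0 mulr0.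
have := congr1 absz eab; rewrite abszM /= => ej.
have : (p ^ j <= j)%N.
  rewrite {2}/j ej; apply: leq_pmulr; by rewrite absz_gt0.
by rewrite leqNgt ltn_expl ?prime_gt1.
Qed.


Section Z.
Variables (S T : nat -> Prop) (x y : {poly int} -> {poly algC}).
Hypothesis Spos : forall m, S m -> (0 < m)%N.
Hypothesis TS : forall m, T m -> S m.
Hypothesis Lx : inLim R S x.
Hypothesis Ly : inLim R S y.
Hypothesis tE : tauEq R T x y.

Let z f := x f - y f.

Lemma ZR f : inPhiS S f -> z f \is a polyOver R.
Proof. by move=> h; rewrite /z rpredB //; [apply: Lx.1 | apply: Ly.1]. Qed.

Lemma ZC f g : inPhiS S f -> inPhiS S g -> dvdZ f g -> toC f %| z g - z f.
Proof.
move=> hf hg fg.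
have [k1 [_ e1]] := Lx.2 f g hf hg fg.
have [k2 [_ e2]] := Ly.2 f g hf hg fg.
have -> : z g - z f = (k1 - k2) * toC f by rewrite mulrBl -e1 -e2 /z; ring.
exact: dvdp_mull.
Qed.

Lemma ZT m : T m -> toC (Phi m) %| z (Phi m).
Proof. by move=> h; have [k [_ e]] := tE h; rewrite /z e dvdp_mull. Qed.

Lemma inPhiS_mul f g : inPhiS S f -> inPhiS S g -> inPhiS S (f * g).
Proof.
move=> [s1 [h1 ->]] [s2 [h2 ->]]; exists (s1 ++ s2); split; last by rewrite big_cat.
by move=> m; rewrite mem_cat => /orP [/h1|/h2].
Qed.

Lemma inPhiS_1 : inPhiS S 1.
Proof. by exists [::]; rewrite big_nil. Qed.

Lemma inPhiS_Phi m : S m -> inPhiS S (Phi m).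
Proof.
by move=> h; exists [:: m]; split; [move=> k; rewrite inE => /eqP -> | rewrite big_seq1].
Qed.

Lemma inPhiS_exp f e : inPhiS S f -> inPhiS S (f ^+ e).
Proof.
move=> h; elim: e => [|e IH]; first by rewrite expr0; apply: inPhiS_1.
by rewrite exprS; apply: inPhiS_mul.
Qed.

Lemma dvdZ_mulr f g : dvdZ f (f * g).
Proof. by exists g; rewrite mulrC. Qed.

Lemma dvdZ_mull f g : dvdZ g (f * g).
Proof. by exists f. Qed.

Lemma dvdZ_trans f g h : dvdZ f g -> dvdZ g h -> dvdZ f h.
Proof. by move=> [a ->] [b ->]; exists (b * a); rewrite mulrA. Qed.

Definition Van m := forall E f, inPhiS S f -> dvdZ (Phi m ^+ E) f ->
  toC (Phi m) ^+ E %| z f.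

Lemma VanI m : S m -> (forall E, toC (Phi m) ^+ E %| z (Phi m ^+ E)) -> Van m.
Proof.
move=> Sm H E f hf dv.
have hE := inPhiS_exp E (inPhiS_Phi Sm).
have := ZC hE hf dv; rewrite toCX => h1.
by rewrite -(subrK (z (Phi m ^+ E)) (z f)) dvdp_add.
Qed.

Lemma STEP m E (Ns : nat -> nat -> Prop) : S m -> kills Ns ->
  (forall r, exists N, Ns r N /\ exists G, [/\ inI N (Phi m ^+ E) G, inPhiS S G &
      toC G %| z (Phi m ^+ E * G)]) ->
  toC (Phi m) ^+ E %| z (Phi m ^+ E).
Proof.
move=> Sm kN H; rewrite -toCX.
have hE := inPhiS_exp E (inPhiS_Phi Sm).
apply: (KEY (Ns := Ns)) => //; first by apply: monic_exp; apply: Phi_monic.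
  exact: ZR.
move=> r; have [N [NsN [G [[a [b eG]] hG dG]]]] := H r.
exists N; split => //.
have hf := inPhiS_mul hE hG.
have [_ Rh] := divR (toC_monic (inPhiS_monic hG)) (toC_over G) (ZR hf).
have [Rq _] := divR (toC_monic (inPhiS_monic hG)) (toC_over G) (ZR hf).
set h := z (Phi m ^+ E * G) %/ toC G.
have eh : z (Phi m ^+ E * G) = h * toC G by rewrite divpK.
have /dvdpP [k ek] := ZC hE hf (dvdZ_mulr _ _).
exists (h * toC a), (h * toC b - k); split; first by rewrite rpredM // toC_over.
have eG' : toC G = N%:R * toC a + toC (Phi m ^+ E) * toC b.
  by rewrite eG toCD !toCM toC_nat.
have : z (Phi m ^+ E) = z (Phi m ^+ E * G) - k * toC (Phi m ^+ E).
  by rewrite -ek opprB addrC subrK.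
rewrite eh eG' => ->; ring.
Qed.

Lemma CPhi a b : (0 < a)%N -> (0 < b)%N -> a != b ->
  coprimep (toC (Phi a)) (toC (Phi b)).
Proof.
move=> a0 b0 ab.
have [za pa] := C_prim_root_exists a0; have [zb pb] := C_prim_root_exists b0.
rewrite /toC /Phi (Cintr_Cyclotomic pa) (Cintr_Cyclotomic pb).
exact: CPc.
Qed.

Lemma PROP m n p : S m -> S n -> padic_sep R p ->
  (exists d, inI p (Phi m) (Phi n ^+ d)) -> Van n -> Van m.
Proof.
move=> Sm Sn sp [d hd] Vn; apply: VanI => // E.
apply: (STEP (Ns := fun r N => N = (p ^ r)%N)) => //; first exact: kill_pow.
move=> r; exists (p ^ r)%N; split => //; exists (Phi n ^+ (d * E * r)); split.
- by rewrite !exprM; apply: I_exp; apply: I_powM.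
- exact: inPhiS_exp (inPhiS_Phi Sn).
- rewrite toCX; apply: Vn; last exact: dvdZ_mull.
  apply: inPhiS_mul; apply: inPhiS_exp; exact: inPhiS_Phi.
Qed.

Lemma chain_S a b : chainR R S a b -> S a.
Proof. by case. Qed.

Lemma relR_Van a b : S a -> S b -> relR R a b -> Van a -> Van b.
Proof.
move=> Sa Sb [-> // | [[p [k [pp [sp [ea | eb]]]]] | R0]] Va.
- case: k ea => [|k] ea; first by move: Va; rewrite ea expn0 muln1.
  have [d dle [A eA]] := CONG pp (Spos Sb) (ltn0Sn k).
  apply: (PROP Sb Sa sp _ Va); exists 1%N; rewrite expr1 -[Phi b]expr1.
  apply: (@I_cong p (Phi b) (Phi a) d A); first by rewrite ea; exact: eA.
  apply: leq_trans dle; have := prime_gt1 pp.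
  rewrite muln_gt0 expn_gt0 (prime_gt0 pp) /=; lia.
- case: k eb => [|k] eb; first by rewrite eb expn0 muln1.
  have [d dle [A eA]] := CONG pp (Spos Sa) (ltn0Sn k).
  apply: (PROP Sb Sa sp _ Va); exists d; exists (- A), 1.
  by rewrite eb /Phi eA; ring.
- by have := R0 1 (rpred1 _) => /eqP; rewrite oner_eq0.
Qed.

Lemma chain_Van a b : chainR R S a b -> Van a -> Van b.
Proof.
elim => // a' b' c' Sa' rab ch IH Va; apply: IH.
exact: relR_Van Sa' (chain_S ch) rab Va.
Qed.

Lemma ZTf m f : T m -> inPhiS S f -> dvdZ (Phi m) f -> toC (Phi m) %| z f.
Proof.
move=> Tm hf dv; have hm := inPhiS_Phi (TS Tm).
rewrite -(subrK (z (Phi m)) (z f)) dvdp_add //; last exact: ZT.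
exact: ZC.
Qed.

Lemma iter_mul (g : {poly int}) n : iter n (GRing.mul g) 1 = g ^+ n.
Proof. by elim: n => [|n IH] //=; rewrite IH exprS. Qed.

Lemma FIN_aux : (forall m, S m -> Van m) -> forall n s, (size s <= n)%N ->
  (forall m, m \in s -> S m) -> forall f, inPhiS S f ->
  dvdZ (\prod_(m <- s) Phi m) f -> toC (\prod_(m <- s) Phi m) %| z f.
Proof.
move=> HV; elim=> [|n IH] [|a s1]; try by move=> *; rewrite big_nil toC1 dvd1p.
  by rewrite /= ltn0.
move=> ss Hs f hf dv; set s := a :: s1 in ss Hs dv *.
set e := count (pred1 a) s; set s2 := filter (predC1 a) s.
have ep : \prod_(m <- s) Phi m = Phi a ^+ e * \prod_(m <- s2) Phi m.
  rewrite (bigID (pred1 a)) /= big_filter; congr (_ * _).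
  rewrite (eq_bigr (fun _ => Phi a)); last by move=> m /eqP ->.
  by rewrite big_const_seq iter_mul.
rewrite ep in dv *; rewrite toCM toCX Gauss_dvdp.
  apply/andP; split.
    apply: (HV a (Hs a (mem_head a s1)) e f hf).
    exact: dvdZ_trans (dvdZ_mulr _ _) dv.
  apply: IH; last exact: dvdZ_trans (dvdZ_mull _ _) dv; last exact: hf.
    rewrite size_filter /= eqxx /=; apply: leq_trans (count_size _ _) _.
    by rewrite -ltnS.
  by move=> m; rewrite mem_filter => /andP [_ /Hs].
apply: coprimep_expl; rewrite toC_prod big_seq.
apply: (big_ind (fun q => coprimep (toC (Phi a)) q)).
- exact: coprimep1.
- by move=> u v hu hv; rewrite coprimepMr hu hv.
move=> m; rewrite mem_filter => /andP [am ms]; apply: CPhi.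
- by apply: Spos; apply: Hs; exact: mem_head.
- exact: Spos (Hs _ ms).
- by rewrite eq_sym.
Qed.

Lemma VanB n : S n ->
  (forall r, exists p k, [/\ (r < p)%N, prime p, padic_sep R p, (0 < k)%N & T (n * p ^ k)%N]) ->
  Van n.
Proof.
move=> Sn HB; apply: VanI => // E.
apply: (STEP (Ns := fun r N => [/\ prime N, (r < N)%N & padic_sep R N])) => //.
  exact: kill_primes.
move=> r; have [p [k [lt pp sp k0 Tm]]] := HB (maxn r E).
exists p; split.
  by split => //; apply: leq_ltn_trans lt; apply: leq_maxl.
exists (Phi (n * p ^ k)); split.
- have [d dle [A eA]] := CONG pp (Spos Sn) k0.
  apply: (@I_cong p (Phi n) _ d A); first exact: eA.
  apply: leq_trans dle; have := leq_ltn_trans (leq_maxr r E) lt.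
  have : (0 < p ^ k.-1)%N by rewrite expn_gt0 prime_gt0.
  move: (p ^ k.-1)%N => X X0 Ep.
  apply: leq_trans (leq_pmulr _ X0); lia.
- exact: inPhiS_Phi (TS Tm).
- apply: ZTf => //; last exact: dvdZ_mull.
  apply: inPhiS_mul; [apply: inPhiS_exp; exact: inPhiS_Phi | exact: inPhiS_Phi (TS Tm)].
Qed.

Lemma VanA n p : S n -> prime p -> padic_sep R p ->
  (forall K, exists k, (K < k)%N /\ T (n * p ^ k)) -> Van n.
Proof.
move=> Sn pp sp HA; apply: VanI => // E.
have n0 := Spos Sn; have p1 := prime_gt1 pp.
have INV : forall r, exists G, exists B : nat, [/\ inI (p ^ r) (Phi n ^+ E) G, inPhiS S G,
   (forall f, inPhiS S f -> dvdZ G f -> toC G %| z f) &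
   (forall m, (B < m)%N -> coprimep (toC (Phi m)) (toC G))].
  elim=> [|r [G [B [iG hG dG cG]]]].
    exists 1, 0%N; split; rewrite ?expn0; first exact: I_one.
    - exact: inPhiS_1.
    - by move=> f _ _; rewrite toC1 dvd1p.
    - by move=> m _; rewrite toC1 coprimep1.
  have [k [lk Tm]] := HA (maxn B E).
  have k0 : (0 < k)%N by apply: leq_ltn_trans lk.
  set m := (n * p ^ k)%N in Tm.
  have Bm : (B < m)%N.
    apply: leq_ltn_trans (leq_maxl B E) _; apply: leq_trans lk _.
    apply: leq_trans (ltnW (ltn_expl k p1)) _; exact: leq_pmull.
  exists (G * Phi m), m; split.
  - rewrite expnSr; apply: I_mul => //.
    have [d dle [A eA]] := CONG pp n0 k0.
    apply: (@I_cong p (Phi n) _ d A); first exact: eA.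
    apply: leq_trans dle.
    have h1 := ltn_expl k.-1 p1.
    have : (0 < p.-1)%N by rewrite -subn1 subn_gt0.
    have := leq_ltn_trans (leq_maxr B E) lk.
    move: (p ^ k.-1)%N h1 => X h1 EK p0.
    apply: leq_trans (leq_pmull _ p0); lia.
  - exact: inPhiS_mul hG (inPhiS_Phi (TS Tm)).
  - move=> f hf dv; rewrite toCM Gauss_dvdp; last by rewrite coprimep_sym cG.
    apply/andP; split.
      by apply: dG hf _; exact: dvdZ_trans (dvdZ_mulr _ _) dv.
    by apply: ZTf => //; exact: dvdZ_trans (dvdZ_mull _ _) dv.
  - move=> m' lm; rewrite toCM coprimepMr cG ?(ltn_trans Bm) //=.
    apply: CPhi; [exact: leq_ltn_trans lm | exact: Spos (TS Tm) | ].
    by rewrite neq_ltn lm orbT.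
apply: (STEP (Ns := fun r N => N = (p ^ r)%N)) => //; first exact: kill_pow.
move=> r; exists (p ^ r)%N; split => //.
have [G [B [iG hG dG _]]] := INV r; exists G; split => //.
apply: dG; last exact: dvdZ_mull.
apply: inPhiS_mul => //; apply: inPhiS_exp; exact: inPhiS_Phi.
Qed.

Lemma VanBase n : S n -> (forall N, exists m, (N < m)%N /\ T m /\ relR R m n) -> Van n.
Proof.
move=> Sn H; have n0 := Spos Sn.
have H' : forall N, exists p k, [/\ prime p, padic_sep R p, (0 < k)%N,
    (N < n * p ^ k)%N & T (n * p ^ k)%N].
  move=> N; have [m [lm [Tm rm]]] := H (maxn N n).
  case: rm => [emn | [[p [k [pp [sp [e1|e2]]]]] | R0]].
  - by move: lm; rewrite emn ltnNge leq_maxr.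
  - case: k e1 => [|k] e1.
      by move: lm; rewrite e1 expn0 muln1 ltnNge leq_maxr.
    exists p, k.+1; split => //; last by rewrite -e1.
    by rewrite -e1; apply: leq_ltn_trans lm; apply: leq_maxl.
  - have : (m <= n)%N by rewrite e2 leq_pmulr // expn_gt0 prime_gt0.
    by rewrite leqNgt (leq_ltn_trans (leq_maxr N n) lm).
  - by have := R0 1 (rpred1 _) => /eqP; rewrite oner_eq0.
case: (classic (forall r, exists p k, [/\ (r < p)%N, prime p, padic_sep R p,
    (0 < k)%N & T (n * p ^ k)%N])) => [HB | nB]; first exact: VanB.
have [r0 Hr0] : exists r0, forall p k, prime p -> padic_sep R p -> (0 < k)%N ->
    T (n * p ^ k)%N -> (p <= r0)%N.
  apply: NNPP => hn; apply: nB => r; apply: NNPP => hr; apply: hn.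
  exists r => p k pp sp k0 Tk; rewrite leqNgt; apply/negP => rp; apply: hr.
  by exists p, k; split.
apply: NNPP => nV.
have U : forall q, exists K, forall p k, (p <= q)%N -> prime p -> padic_sep R p ->
    (K < k)%N -> ~ T (n * p ^ k)%N.
  elim=> [|q [K1 HK1]].
    by exists 0%N => p k lp pp; move: (prime_gt0 pp); rewrite ltnNge lp.
  case: (classic (prime q.+1 /\ padic_sep R q.+1)) => [[pq sq] | npq].
    have [K2 HK2] : exists K2, forall k, (K2 < k)%N -> ~ T (n * q.+1 ^ k)%N.
      apply: NNPP => h; apply: nV; apply: (VanA Sn pq sq) => K.
      apply: NNPP => hk; apply: h; exists K => k Kk Tk; apply: hk; by exists k.
    exists (maxn K1 K2) => p k lp pp sp Kk Tk.
    move: lp; rewrite leq_eqVlt => /orP [/eqP ep | lp].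
      by apply: (HK2 k) => //; [apply: leq_ltn_trans Kk; apply: leq_maxr | rewrite -ep].
    by apply: (HK1 p k) => //; apply: leq_ltn_trans Kk; apply: leq_maxl.
  exists K1 => p k lp pp sp Kk Tk.
  move: lp; rewrite leq_eqVlt => /orP [/eqP ep | lp].
    by apply: npq; rewrite -ep.
  exact: (HK1 p k).
have [K HK] := U r0.
have [p [k [pp sp k0 lt Tk]]] := H' (n * r0 ^ K)%N.
have pr := Hr0 p k pp sp k0 Tk.
have kK : (k <= K)%N.
  by rewrite leqNgt; apply/negP => Kk; exact: (HK p k pr pp sp Kk Tk).
move: lt; rewrite ltnNge leq_mul2l.
have r00 : (0 < r0)%N by apply: leq_trans pr; apply: prime_gt0.
rewrite (leq_trans _ (leq_pexp2l r00 kK)) ?orbT //.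
by rewrite leq_exp2r.
Qed.

Lemma FIN : (forall m, S m -> Van m) -> forall f, inPhiS S f -> toC f %| z f.
Proof.
move=> HV f hf; have [s [Hs ef]] := hf.
have := FIN_aux HV (leqnn (size s)) Hs hf; rewrite -ef; apply.
by exists 1; rewrite mul1r.
Qed.

End Z.
End Div.

Lemma chain_trans (R : {pred algC}) S a b c :
  chainR R S a b -> chainR R S b c -> chainR R S a c.
Proof.
elim=> // a' b' c' Sa' r ch IH h; exact: chainR_step Sa' r (IH h).
Qed.

Lemma chain_pos (R : {pred algC}) : (forall p, prime p -> padic_sep R p) ->
  forall a, (0 < a)%N ->
  chainR R (fun m => (0 < m)%N) a 1 /\ chainR R (fun m => (0 < m)%N) 1 a.
Proof.
move=> sepR; elim/ltn_ind => a IH a0.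
case: (ltngtP a 1) => [|a1|->]; first by move/(leq_ltn_trans a0); rewrite ltnn.
  set p := pdiv a; have pp : prime p by apply: pdiv_prime.
  have ea : a = (a %/ p * p)%N by rewrite divnK // pdiv_dvd.
  have a'0 : (0 < a %/ p)%N by rewrite divn_gt0 ?prime_gt0 // pdiv_leq.
  have a'a : (a %/ p < a)%N by rewrite ltn_Pdiv ?prime_gt1.
  have [IH1 IH2] := IH _ a'a a'0.
  split.
    apply: chainR_step IH1 => //; right; left; exists p, 1%N; split => //.
    by split; [exact: sepR | left; rewrite expn1].
  apply: chain_trans IH2 _; apply: chainR_step (chainR_refl _ a0) => //.
  right; left; exists p, 1%N; split => //.
  by split; [exact: sepR | right; rewrite expn1].
by split; apply: chainR_refl.
Qed.

Lemma part1 : forall (R : {pred algC}) (S T : nat -> Prop),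
      subring_closed R ->
      (forall m, S m -> (0 < m)%N) ->
      connectedR R S ->
      (forall m, T m -> S m) ->
      (exists n, S n /\ forall N : nat, exists m, (N < m)%N /\ T m /\ relR R m n) ->
      tau_injective R S T.
Proof.
move=> R S T RR Spos [_ conn] TS [n [Sn Hn]] x y Lx Ly tE f hf.
have HV : forall m, S m -> Van S x y m.
  move=> m Sm; apply: (chain_Van RR Spos Lx Ly (conn n m Sn Sm)).
  exact: (VanBase RR Spos TS Lx Ly tE Sn Hn).
have := FIN Spos HV hf.
move=> h; apply/(cong_iff RR (inPhiS_monic hf) (Lx.1 f hf) (Ly.1 f hf)).
exact: h.
Qed.

Theorem theorem6p1 :
  (forall (R : {pred algC}) (S T : nat -> Prop),
      subring_closed R ->
      (forall m, S m -> (0 < m)%N) ->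
      connectedR R S ->
      (forall m, T m -> S m) ->
      (exists n, S n /\ forall N : nat, exists m, (N < m)%N /\ T m /\ relR R m n) ->
      tau_injective R S T) /\
  (forall (R : {pred algC}) (T : nat -> Prop),
      subring_closed R ->
      {subset R <= Aint} ->
      (forall m, T m -> (0 < m)%N) ->
      (forall N : nat, exists m, (N < m)%N /\ T m /\ prime_power m) ->
      tau_injective R (fun m => (0 < m)%N) T).
Proof.
split; first exact: part1.
move=> R T RR RA Tpos HT.
have sepR : forall p, prime p -> padic_sep R p by move=> p pp; apply: (sepAint RR) => //.
apply: part1 => //.
  split; first by exists 1%N.
  move=> a b a0 b0; have [h1 _] := chain_pos sepR a0; have [_ h2] := chain_pos sepR b0.
  exact: chain_trans h1 h2.
exists 1%N; split => //.
move=> N; have [m [lm [Tm [p [k [pp [k0 em]]]]]]] := HT N.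
exists m; split => //; split => //; right; left; exists p, k; split => //.
by split; [exact: sepR | left; rewrite mul1n].
Qed.
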